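(* Let $(M,\varphi,\xi,\eta)$ be an anti-normal almost contact manifold. Then: (i) $d\eta(\xi,\cdot)=0$, equivalently $\mathcal{L}_\xi\eta=0$; (ii) $\mathcal{L}_\xi d\eta=0$; (iii) $\mathcal{L}_\xi\varphi=0$; (iv) $d\eta(\varphi X,\varphi Y)=-d\eta(X,Y)$ for all $X,Y\in\mathfrak{X}(M)$, equivalently $d\eta(\varphi X,Y)=d\eta(X,\varphi Y)$ for all $X,Y\in\mathfrak{X}(M)$.
   Context: An almost contact manifold $(M,\varphi,\xi,\eta)$ is an odd-dimensional smooth manifold with a $(1,1)$-tensor field $\varphi$, a vector field $\xi$ and a $1$-form $\eta$ such that $\varphi^2=-I+\eta\otimes\xi$ and $\eta(\xi)=1$ (hence $\varphi\xi=0$, $\eta\circ\varphi=0$). Convention: $d\eta(X,Y)=X(\eta(Y))-Y(\eta(X))-\eta([X,Y])$. The tensor $N_\varphi$ is $N_\varphi(X,Y)=[\varphi X,\varphi Y]+\varphi^2[X,Y]-\varphi[X,\varphi Y]-\varphi[\varphi X,Y]+d\eta(X,Y)\xi$. The structure is called anti-normal if $N_\varphi(X,Y)=2\,d\eta(X,Y)\xi$ for all vector fields $X,Y$. *)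

(* Defs.v *)
(* Algebraic model of a smooth manifold M:
   A = the commutative R-algebra of smooth functions C^oo(M),
   vector fields = R-linear derivations of A (for a smooth manifold these are
   exactly the smooth vector fields), tensor fields = A-linear maps. *)
From HB Require Import structures.
From mathcomp Require Import all_boot all_order all_algebra.
Set Implicit Arguments. Unset Strict Implicit. Unset Printing Implicit Defensive.
Import Order.TTheory GRing.Theory Num.Theory.
Local Open Scope ring_scope.

Section AlmostContact.
Variables (R : comNzRingType) (A : comAlgType R).

Definition is_vf (X : A -> A) : Prop :=
  (forall (c : R) (a b : A), X (c *: a + b) = c *: X a + X b) /\
  (forall a b : A, X (a * b) = a * X b + X a * b).

Definition vadd (X Y : A -> A) : A -> A := fun a => X a + Y a.
Definition vsub (X Y : A -> A) : A -> A := fun a => X a - Y a.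
Definition vscale (f : A) (X : A -> A) : A -> A := fun a => f * X a.
Definition vzero : A -> A := fun _ => 0.
Definition vbr (X Y : A -> A) : A -> A := fun a => X (Y a) - Y (X a).

Record almost_contact (phi : (A -> A) -> (A -> A)) (xi : A -> A)
    (eta : (A -> A) -> A) : Prop := {
  ac_phi_vf : forall X, is_vf X -> is_vf (phi X);
  ac_phi_lin : forall (f : A) X Y, is_vf X -> is_vf Y ->
      phi (vadd (vscale f X) Y) = vadd (vscale f (phi X)) (phi Y);
  ac_eta_lin : forall (f : A) X Y, is_vf X -> is_vf Y ->
      eta (vadd (vscale f X) Y) = f * eta X + eta Y;
  ac_xi_vf : is_vf xi;
  ac_phi2 : forall X, is_vf X ->
      phi (phi X) = vadd (vscale (-1) X) (vscale (eta X) xi);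
  ac_eta_xi : eta xi = 1;
  ac_phi_xi : phi xi = vzero;
  ac_eta_phi : forall X, is_vf X -> eta (phi X) = 0 }.

Definition deta (eta : (A -> A) -> A) (X Y : A -> A) : A :=
  X (eta Y) - Y (eta X) - eta (vbr X Y).

Definition Nphi (phi : (A -> A) -> (A -> A)) (xi : A -> A)
    (eta : (A -> A) -> A) (X Y : A -> A) : A -> A :=
  vadd (vsub (vsub (vadd (vbr (phi X) (phi Y)) (phi (phi (vbr X Y))))
                   (phi (vbr X (phi Y))))
             (phi (vbr (phi X) Y)))
       (vscale (deta eta X Y) xi).

Definition anti_normal phi xi eta : Prop :=
  almost_contact phi xi eta /\
  forall X Y, is_vf X -> is_vf Y ->
    Nphi phi xi eta X Y = vscale (2%:R * deta eta X Y) xi.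

Definition Lie_eta (xi : A -> A) (eta : (A -> A) -> A) (X : A -> A) : A :=
  xi (eta X) - eta (vbr xi X).
Definition Lie_deta (xi : A -> A) (eta : (A -> A) -> A) (X Y : A -> A) : A :=
  xi (deta eta X Y) - deta eta (vbr xi X) Y - deta eta X (vbr xi Y).
Definition Lie_phi (phi : (A -> A) -> (A -> A)) (xi : A -> A) (X : A -> A)
    : A -> A :=
  vsub (vbr xi (phi X)) (phi (vbr xi X)).

End AlmostContact.

(* Main.v *)
Require Import Defs.
From mathcomp Require Import all_boot all_order all_algebra.
From mathcomp Require Import ring.
From Stdlib Require Import FunctionalExtensionality.
Import GRing.Theory.
Local Open Scope ring_scope.

Lemma vfD {R : comNzRingType} {A : comAlgType R} (X : A -> A) a b :
  is_vf X -> X (a + b) = X a + X b.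
Proof. by case=> h _; have := h 1 a b; rewrite !scale1r. Qed.

Lemma vf0 {R : comNzRingType} {A : comAlgType R} (X : A -> A) :
  is_vf X -> X 0 = 0.
Proof.
move=> hX; have h := vfD X 0 0 hX; rewrite addr0 in h.
by apply: (addrI (X 0)); rewrite addr0 -h.
Qed.

Lemma vfN {R : comNzRingType} {A : comAlgType R} (X : A -> A) a :
  is_vf X -> X (- a) = - X a.
Proof.
by move=> hX; apply/eqP; rewrite -addr_eq0 -vfD // addNr vf0.
Qed.

Lemma vfB {R : comNzRingType} {A : comAlgType R} (X : A -> A) a b :
  is_vf X -> X (a - b) = X a - X b.
Proof. by move=> hX; rewrite vfD // vfN. Qed.

Lemma vfM {R : comNzRingType} {A : comAlgType R} (X : A -> A) a b :
  is_vf X -> X (a * b) = a * X b + X a * b.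
Proof. by case=> _ h. Qed.

Lemma vfZ {R : comNzRingType} {A : comAlgType R} (X : A -> A) (c : R) a :
  is_vf X -> X (c *: a) = c *: X a.
Proof. by move=> hX; case: (hX) => h _; have := h c a 0; rewrite addr0 vf0 // addr0. Qed.

Lemma vf1 {R : comNzRingType} {A : comAlgType R} (X : A -> A) :
  is_vf X -> X 1 = 0.
Proof.
move=> hX; have h := vfM X 1 1 hX; rewrite !mul1r !mulr1 in h.
by apply: (addrI (X 1)); rewrite addr0 -h.
Qed.

Lemma vf_zero {R : comNzRingType} {A : comAlgType R} : is_vf (@vzero R A).
Proof. by split=> *; rewrite /vzero ?scaler0 ?mulr0 ?mul0r ?addr0. Qed.

Lemma vf_add {R : comNzRingType} {A : comAlgType R} (X Y : A -> A) :
  is_vf X -> is_vf Y -> is_vf (vadd X Y).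
Proof.
move=> hX hY; split=> [c a b|a b]; rewrite /vadd.
  by rewrite (vfD X) // (vfD Y) // (vfZ X) // (vfZ Y) // scalerDr addrACA.
rewrite (vfM X) // (vfM Y) //; ring.
Qed.

Lemma vf_sub {R : comNzRingType} {A : comAlgType R} (X Y : A -> A) :
  is_vf X -> is_vf Y -> is_vf (vsub X Y).
Proof.
move=> hX hY; split=> [c a b|a b]; rewrite /vsub.
  by rewrite (vfD X) // (vfD Y) // (vfZ X) // (vfZ Y) // scalerBr opprD addrACA.
rewrite (vfM X) // (vfM Y) //; ring.
Qed.

Lemma vf_scale {R : comNzRingType} {A : comAlgType R} (f : A) (X : A -> A) :
  is_vf X -> is_vf (vscale f X).
Proof.
move=> hX; split=> [c a b|a b]; rewrite /vscale.
  by rewrite (vfD X) // (vfZ X) // mulrDr scalerAr.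
rewrite (vfM X) //; ring.
Qed.

Lemma vf_br {R : comNzRingType} {A : comAlgType R} (X Y : A -> A) :
  is_vf X -> is_vf Y -> is_vf (vbr X Y).
Proof.
move=> hX hY; split=> [c a b|a b]; rewrite /vbr.
  rewrite !(vfD X) // !(vfD Y) // !(vfZ X) // !(vfZ Y) //.
  rewrite ?(vfD X) // ?(vfD Y) // ?(vfZ X) // ?(vfZ Y) //.
  by rewrite scalerBr opprD addrACA.
rewrite !(vfM X) // !(vfM Y) // !(vfD X) // !(vfD Y) // ?(vfM X) // ?(vfM Y) // ?(vfD X) // ?(vfD Y) //.
 ring.
Qed.

Ltac vfa ac := repeat match goal with
 | |- is_vf _ => assumption
 | |- is_vf _ => exact (ac_xi_vf ac)
 | |- is_vf (vbr _ _) => apply: vf_br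
 | |- is_vf (vadd _ _) => apply: vf_add
 | |- is_vf (vsub _ _) => apply: vf_sub
 | |- is_vf (vscale _ _) => apply: vf_scale
 | |- is_vf (@vzero _ _) => apply: vf_zero
 | |- is_vf (?p _) => apply: (ac_phi_vf ac)
end.


Lemma eta_add {R : comNzRingType} {A : comAlgType R} {phi xi} {eta : (A -> A) -> A}
  (ac : almost_contact phi xi eta) {U V} : is_vf U -> is_vf V ->
  eta (vadd U V) = eta U + eta V.
Proof.
move=> hU hV; have := ac_eta_lin ac 1 hU hV.
have -> : vadd (vscale 1 U) V = vadd U V.
  by apply: functional_extensionality => a; rewrite /vadd /vscale mul1r.
by rewrite mul1r.
Qed.

Lemma eta_zero {R : comNzRingType} {A : comAlgType R} {phi xi} {eta : (A -> A) -> A}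
  (ac : almost_contact phi xi eta) : eta (@vzero R A) = 0.
Proof.
have := eta_add ac vf_zero vf_zero.
have -> : vadd (@vzero R A) (@vzero _ _) = (@vzero _ _).
  by apply: functional_extensionality => a; rewrite /vadd /vzero addr0.
by move=> h; apply: (addrI (eta (@vzero _ _))); rewrite addr0 -h.
Qed.

Lemma eta_scale {R : comNzRingType} {A : comAlgType R} {phi xi} {eta : (A -> A) -> A}
  (ac : almost_contact phi xi eta) f {U} : is_vf U ->
  eta (vscale f U) = f * eta U.
Proof.
move=> hU; have := ac_eta_lin ac f hU vf_zero.
have -> : vadd (vscale f U) (@vzero _ _) = vscale f U.
  by apply: functional_extensionality => a; rewrite /vadd /vzero addr0.
by rewrite (eta_zero ac) addr0.
Qed.

Lemma eta_sub {R : comNzRingType} {A : comAlgType R} {phi xi} {eta : (A -> A) -> A}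
  (ac : almost_contact phi xi eta) {U V} : is_vf U -> is_vf V ->
  eta (vsub U V) = eta U - eta V.
Proof.
move=> hU hV.
have -> : vsub U V = vadd U (vscale (-1) V).
  by apply: functional_extensionality => a; rewrite /vadd /vsub /vscale mulN1r.
by rewrite (eta_add ac) ?(eta_scale ac) ?mulN1r //; apply: vf_scale.
Qed.

Lemma phi_zero {R : comNzRingType} {A : comAlgType R} {phi xi} {eta : (A -> A) -> A}
  (ac : almost_contact phi xi eta) : phi (@vzero R A) = (@vzero _ _).
Proof.
have h := ac_phi_lin ac 1 (@vf_zero R A) vf_zero.
apply: functional_extensionality => a.
have := congr1 (fun F => F a) h.
have -> : vadd (vscale 1 (@vzero R A)) (@vzero _ _) = (@vzero _ _).
  by apply: functional_extensionality => b; rewrite /vadd /vscale /vzero mulr0 addr0.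
rewrite /vadd /vscale /vzero mul1r => h2.
by apply: (addrI (phi (@vzero _ _) a)); rewrite addr0 -h2.
Qed.

Lemma phi_scale {R : comNzRingType} {A : comAlgType R} {phi xi} {eta : (A -> A) -> A}
  (ac : almost_contact phi xi eta) f {U} : is_vf U ->
  phi (vscale f U) = vscale f (phi U).
Proof.
move=> hU; have := ac_phi_lin ac f hU vf_zero.
have -> : vadd (vscale f U) (@vzero _ _) = vscale f U.
  by apply: functional_extensionality => a; rewrite /vadd /vzero addr0.
rewrite (phi_zero ac) => ->.
by apply: functional_extensionality => a; rewrite /vadd /vzero addr0.
Qed.

Lemma vbr_zero_l {R : comNzRingType} {A : comAlgType R} (Z : A -> A) :
  is_vf Z -> vbr (@vzero _ _) Z = (@vzero _ _).
Proof.
move=> hZ; apply: functional_extensionality => a.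
by rewrite /vbr /vzero vf0 // subr0.
Qed.

Lemma deta_zero_l {R : comNzRingType} {A : comAlgType R} {phi xi} {eta : (A -> A) -> A}
  (ac : almost_contact phi xi eta) Z : is_vf Z -> deta eta (@vzero _ _) Z = 0.
Proof.
move=> hZ; rewrite /deta vbr_zero_l // (eta_zero ac) vf0 //.
by rewrite /vzero !subr0.
Qed.

Lemma deta_antisym {R : comNzRingType} {A : comAlgType R} {phi xi} {eta : (A -> A) -> A}
  (ac : almost_contact phi xi eta) X Y : is_vf X -> is_vf Y ->
  deta eta X Y = - deta eta Y X.
Proof.
move=> hX hY; rewrite /deta.
have -> : vbr Y X = vscale (-1) (vbr X Y).
  by apply: functional_extensionality => a; rewrite /vbr /vscale mulN1r opprB.
rewrite (eta_scale ac); last by apply: vf_br.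
ring.
Qed.

Lemma deta_lin2 {R : comNzRingType} {A : comAlgType R} {phi xi} {eta : (A -> A) -> A}
  (ac : almost_contact phi xi eta) Z (g : A) U V : is_vf Z -> is_vf U -> is_vf V ->
  deta eta Z (vadd (vscale g U) V) = g * deta eta Z U + deta eta Z V.
Proof.
move=> hZ hU hV; rewrite /deta.
have -> : vbr Z (vadd (vscale g U) V) =
    vadd (vscale g (vbr Z U)) (vadd (vscale (Z g) U) (vbr Z V)).
  apply: functional_extensionality => a.
  rewrite /vbr /vadd /vscale (vfD Z) // !(vfM Z) //; ring.
rewrite (ac_eta_lin ac) // (eta_add ac); try by vfa ac.
rewrite (eta_scale ac) //; try by vfa ac.
rewrite (ac_eta_lin ac) //; try by vfa ac.
rewrite (vfD Z) // (vfM Z) // /vadd /vscale; ring.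
Qed.

Lemma deta_zero_r {R : comNzRingType} {A : comAlgType R} {phi xi} {eta : (A -> A) -> A}
  (ac : almost_contact phi xi eta) Z : is_vf Z -> deta eta Z (@vzero _ _) = 0.
Proof.
by move=> hZ; rewrite (deta_antisym ac) ?(deta_zero_l ac) ?oppr0 //; apply: vf_zero.
Qed.

Lemma deta_scale2 {R : comNzRingType} {A : comAlgType R} {phi xi} {eta : (A -> A) -> A}
  (ac : almost_contact phi xi eta) Z (g : A) U : is_vf Z -> is_vf U ->
  deta eta Z (vscale g U) = g * deta eta Z U.
Proof.
move=> hZ hU.
have -> : vscale g U = vadd (vscale g U) (@vzero _ _).
  by apply: functional_extensionality => a; rewrite /vadd /vzero addr0.
by rewrite (deta_lin2 ac) ?(deta_zero_r ac) ?addr0 //; apply: vf_zero.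
Qed.

Lemma eta_N {R : comNzRingType} {A : comAlgType R} {phi xi} {eta : (A -> A) -> A}
  (ac : almost_contact phi xi eta) (B1 B2 B3 B4 : A -> A) d :
  is_vf B1 -> is_vf B2 -> is_vf B3 -> is_vf B4 ->
  eta (vadd (vsub (vsub (vadd B1 (phi B2)) (phi B3)) (phi B4)) (vscale d xi))
  = eta B1 + d.
Proof.
move=> h1 h2 h3 h4.
rewrite (eta_add ac); try by vfa ac.
rewrite !(eta_sub ac); try by vfa ac.
rewrite (eta_add ac); try by vfa ac.
rewrite (eta_scale ac d (ac_xi_vf ac)) !(ac_eta_phi ac) //.
by rewrite (ac_eta_xi ac) !subr0 addr0 mulr1.
Qed.

Theorem mainTheorem1 (R : comNzRingType) (A : comAlgType R)
    (phi : (A -> A) -> (A -> A)) (xi : A -> A) (eta : (A -> A) -> A) :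
  anti_normal phi xi eta ->
  [/\ (forall X, is_vf X -> deta eta xi X = 0)
      /\ (forall X, is_vf X -> Lie_eta xi eta X = 0),
      (forall X Y, is_vf X -> is_vf Y -> Lie_deta xi eta X Y = 0),
      (forall X, is_vf X -> Lie_phi phi xi X = @vzero R A)
    & (forall X Y, is_vf X -> is_vf Y ->
         deta eta (phi X) (phi Y) = - deta eta X Y)
      /\ (forall X Y, is_vf X -> is_vf Y ->
         deta eta (phi X) Y = deta eta X (phi Y))].
Proof.
move=> [ac hN].
have hxi := ac_xi_vf ac.
have K1 : forall X Y, is_vf X -> is_vf Y ->
    eta (vbr (phi X) (phi Y)) = deta eta X Y.
  move=> X Y hX hY; have := congr1 eta (hN X Y hX hY).
  rewrite /Nphi (eta_N ac); try by vfa ac.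
  rewrite (eta_scale ac) // (ac_eta_xi ac) mulr1 => h.
  have -> : eta (vbr (phi X) (phi Y)) =
     (eta (vbr (phi X) (phi Y)) + deta eta X Y) - deta eta X Y by ring.
  rewrite h; ring.
have P4a : forall X Y, is_vf X -> is_vf Y ->
    deta eta (phi X) (phi Y) = - deta eta X Y.
  move=> X Y hX hY; rewrite {1}/deta K1 // !(ac_eta_phi ac) //.
  rewrite (vf0 (phi X)); last by vfa ac.
  rewrite (vf0 (phi Y)); last by vfa ac.
  ring.
have P1 : forall X, is_vf X -> deta eta xi X = 0.
  move=> X hX; have := P4a xi X hxi hX.
  rewrite (ac_phi_xi ac) (deta_zero_l ac); last by vfa ac.
  by move/esym/eqP; rewrite oppr_eq0 => /eqP.
have P1b : forall X, is_vf X -> Lie_eta xi eta X = 0.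
  move=> X hX; have := P1 X hX; rewrite /deta (ac_eta_xi ac) vf1 // subr0.
  by rewrite /Lie_eta.
have Ex : forall X, is_vf X -> eta (vbr xi X) = xi (eta X).
  move=> X hX; have := P1b X hX; rewrite /Lie_eta => /eqP.
  by rewrite subr_eq0 => /eqP.
split.
- by split.
- move=> X Y hX hY.
  have J : vbr xi (vbr X Y) = vadd (vbr (vbr xi X) Y) (vbr X (vbr xi Y)).
    apply: functional_extensionality => a.
    rewrite /vbr /vadd !(vfB xi) // !(vfB X) // !(vfB Y) //; ring.
  have K : eta (vbr (vbr xi X) Y) = xi (eta (vbr X Y)) - eta (vbr X (vbr xi Y)).
    rewrite -Ex; last by vfa ac.
    rewrite J (eta_add ac (U:=vbr (vbr xi X) Y)); try by vfa ac.
    ring.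
  rewrite /Lie_deta /deta Ex // Ex // K.
  have -> : vbr xi X (eta Y) = xi (X (eta Y)) - X (xi (eta Y)) by [].
  have -> : vbr xi Y (eta X) = xi (Y (eta X)) - Y (xi (eta X)) by [].
  rewrite !(vfB xi) //; ring.
- move=> Y hY.
  have h := hN xi Y hxi hY.
  rewrite /Nphi (ac_phi_xi ac) (vbr_zero_l (phi Y) (ac_phi_vf ac hY)) in h.
  rewrite (vbr_zero_l Y hY) (phi_zero ac) (P1 Y hY) in h.
  have E1 : phi (vbr xi (phi Y)) = phi (phi (vbr xi Y)).
    apply: functional_extensionality => a.
    have := congr1 (fun F => F a) h.
    rewrite /vadd /vsub /vscale /vzero.
    rewrite !mulr0 !mul0r !subr0 add0r addr0 => h2.
    by apply/eqP; rewrite eq_sym -subr_eq0 h2.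
  rewrite (ac_phi2 ac) in E1; last by vfa ac.
  rewrite Ex // in E1.
  have E2 := congr1 phi E1.
  rewrite (ac_phi2 ac) in E2; last by vfa ac.
  rewrite (ac_phi_lin ac) in E2; try by vfa ac.
  rewrite Ex in E2; last by vfa ac.
  rewrite (ac_eta_phi ac) // vf0 // (phi_scale ac) // (ac_phi_xi ac) in E2.
  apply: functional_extensionality => a.
  have := congr1 (fun F => F a) E2.
  rewrite /Lie_phi /vadd /vsub /vscale /vzero !mulr0 !mul0r !addr0 !mulN1r.
  by move/oppr_inj => ->; rewrite subrr.
- split; first exact: P4a.
  move=> X Y hX hY.
  have := P4a X (phi Y) hX (ac_phi_vf ac hY).
  rewrite (ac_phi2 ac) // (deta_lin2 ac); try by vfa ac.
  rewrite (deta_scale2 ac); try by vfa ac.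
  rewrite (deta_antisym ac (phi X) xi); try by vfa ac.
  rewrite P1; last by vfa ac.
  rewrite oppr0 mulr0 addr0 mulN1r => /oppr_inj.
  done.
Qed.
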